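(* Let $G$ be a torsionless abelian group that binds some subgroup of infinite rank. Then there is a surjective homomorphism from $G$ onto a subgroup $G'$ of $\mathbb{Z}^{\omega}$ such that the subgroup $G'+\mathbb{Z}^{(\omega)}$ of $\mathbb{Z}^\omega$ binds $\mathbb{Z}^{(\omega)}$.
   Context: All groups are abelian. $\mathbb{Z}^{\omega}$ is the product of countably many copies of $\mathbb{Z}$, and $\mathbb{Z}^{(\omega)}\subseteq\mathbb{Z}^\omega$ is the subgroup of sequences with only finitely many nonzero entries. A group is torsionless if it embeds in $\mathbb{Z}^I$ for some set $I$. Rank means torsion-free rank. A group $G$ binds a subgroup $H$ if every homomorphism from $G$ to a free abelian group maps $H$ into a group of finite rank. *)

(* Defs.v *)
From HB Require Import structures.
From mathcomp Require Import all_boot all_order all_algebra.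
From mathcomp Require Import boolp classical_sets functions.
Set Implicit Arguments. Unset Strict Implicit. Unset Printing Implicit Defensive.
Import Order.TTheory GRing.Theory Num.Theory.
Local Open Scope ring_scope.
Local Open Scope classical_set_scope.

Definition is_subgroup (K : zmodType) (H : set K) : Prop :=
  H 0 /\ forall x y, H x -> H y -> H (x - y).

Definition hom_on (K F : zmodType) (A : set K) (f : K -> F) : Prop :=
  forall x y, A x -> A y -> f (x + y) = f x + f y.

Definition Zindep (K : zmodType) (m : nat) (v : 'I_m -> K) : Prop :=
  forall c : 'I_m -> int, \sum_(k < m) v k *~ c k = 0 -> forall k, c k = 0.

Definition finite_rank (K : zmodType) (S : set K) : Prop :=
  exists n : nat, forall (m : nat) (v : 'I_m -> K),
    (forall k, S (v k)) -> Zindep v -> (m <= n)%N.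

Definition free_abelian (F : zmodType) : Prop :=
  exists (I : Type) (b : I -> F),
    (forall (m : nat) (idx : 'I_m -> I), injective idx ->
        Zindep (fun k => b (idx k))) /\
    (forall x : F, exists (m : nat) (idx : 'I_m -> I) (c : 'I_m -> int),
        x = \sum_(k < m) b (idx k) *~ c k).

Definition binds_in (K : zmodType) (A H : set K) : Prop :=
  forall (F : zmodType) (f : K -> F), free_abelian F -> hom_on A f ->
    finite_rank (f @` H).

Definition binds (G : zmodType) (H : set G) : Prop := binds_in setT H.

(* torsionless: embeds in Z^I for some set I *)
Definition torsionless (G : zmodType) : Prop :=
  exists (I : Type) (f : G -> (I -> int)),
    (forall x y, f (x + y) = f x + f y) /\ injective f.

Definition Zomega := nat -> int.
Definition Zfin : set Zomega :=
  [set y | exists N : nat, forall n, (N <= n)%N -> y n = 0].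

(* Main.v *)
Require Import Defs.
From HB Require Import structures.
From mathcomp Require Import all_boot all_order all_algebra.
From mathcomp Require Import boolp classical_sets functions.
Import GRing.Theory Num.Theory.
Local Open Scope ring_scope.

Lemma hom_zmul (K F : zmodType) (A : set K) (f : K -> F) :
  hom_on A f -> A 0 -> (forall x y, A x -> A y -> A (x - y)) ->
  forall x k, A x -> f (x *~ k) = f x *~ k.
Proof.
move=> hf A0 AB.
have AN x : A x -> A (- x) by move=> Ax; rewrite -sub0r; apply: AB.
have AD x y : A x -> A y -> A (x + y) by move=> Ax Ay; rewrite -(opprK y); apply: AB => //; apply: AN.
have f0 : f 0 = 0.
  by have h := hf 0 0 A0 A0; rewrite addr0 in h; apply: (addrI (f 0)); rewrite addr0 -h.
have fN x : A x -> f (- x) = - f x.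
  move=> Ax; apply/eqP; rewrite -subr_eq0 opprK addrC -hf //; last exact: AN.
  by rewrite addrN f0.
have An x n : A x -> A (x *+ n).
  by move=> Ax; elim: n => [|n IH]; rewrite ?mulr0n // mulrS; apply: AD.
have fn x n : A x -> f (x *+ n) = f x *+ n.
  move=> Ax; elim: n => [|n IH]; first by rewrite !mulr0n f0.
  by rewrite !mulrS hf ?IH //; apply: An.
move=> x [n|n] Ax.
  by rewrite -!pmulrn fn.
rewrite !NegzE !mulrNz fN -?pmulrn ?fn //; exact: An.
Qed.

Lemma hom_sum (K F : zmodType) (f : K -> F) :
  (forall x y, f (x + y) = f x + f y) ->
  forall m (F0 : 'I_m -> K), f (\sum_(k < m) F0 k) = \sum_(k < m) f (F0 k).
Proof.
move=> hf m F0.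
have f0 : f 0 = 0.
  by have h := hf 0 0; rewrite addr0 in h; apply: (addrI (f 0)); rewrite addr0 -h.
by apply: (big_morph f hf f0).
Qed.

Lemma clear_den m (c : 'I_m -> rat) :
  exists D : int, D != 0 /\ forall k, exists a : int, c k * D%:~R = a%:~R.
Proof.
exists (\prod_k denq (c k)); split.
  by apply/prodf_neq0 => k _; rewrite denq_neq0.
move=> k; exists (numq (c k) * \prod_(k' | k' != k) denq (c k')).
by rewrite (bigD1 k) //= !intrM numqE mulrA.
Qed.

Lemma sum_clear p (x a : 'I_p -> int) (y : 'I_p -> rat) (D : int) :
  (forall k, y k * D%:~R = (a k)%:~R) ->
  (\sum_k (x k)%:~R * y k) * D%:~R = (\sum_k x k * a k)%:~R.
Proof.
move=> h; rewrite mulr_suml rmorph_sum; apply: eq_bigr => k _.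
by rewrite -mulrA h -intrM.
Qed.

Definition Vmat (I : Type) m (v : 'I_m -> I -> int) p (J : nat -> I) : 'M[rat]_(m, p) :=
  \matrix_(j, k) (v j (J (val k)))%:~R.

Lemma eval_sum (I : Type) m (v : 'I_m -> I -> int) (a : 'I_m -> int) i :
  (\sum_j v j *~ a j) i = \sum_j v j i * a j.
Proof.
have ev : forall f g : I -> int, (fun h : I -> int => h i) (f + g) = f i + g i by [].
rewrite (@hom_sum _ _ (fun h : I -> int => h i) ev); apply: eq_bigr => j _ /=.
rewrite -mulrzz.
have := @hom_zmul _ _ setT (fun h : I -> int => h i) (fun _ _ _ _ => erefl) Logic.I (fun _ _ _ _ => Logic.I) (v j) (a j) Logic.I.
by [].
Qed.
Arguments Vmat {I m} v p J.
Arguments hom_sum {K F f}.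
Arguments hom_zmul {K F A f}.

Lemma full_rank (I : Type) (i0 : I) m (v : 'I_m -> I -> int) :
  Zindep v -> exists p (J : nat -> I), \rank (Vmat v p J) = m.
Proof.
move=> Hv.
pose P := fun r : nat => `[< exists p (J : nat -> I), \rank (Vmat v p J) = r >].
have exP : exists r, P r.
  by exists (\rank (Vmat v 0 (fun _ => i0))); apply/asboolP; exists 0%N, (fun _ => i0).
have ubP : forall r, P r -> (r <= m)%N.
  by move=> r /asboolP [p [J <-]]; apply: rank_leq_row.
case: (ex_maxnP exP ubP) => r /asboolP [p0 [J0 Hr]] maxr.
have rm : (r <= m)%N by rewrite -Hr rank_leq_row.
case: (ltnP r m) => [rltm|]; last by move=> mler; exists p0, J0; rewrite Hr; apply/eqP; rewrite eqn_leq rm.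
exfalso.
set V0 := Vmat v p0 J0.
pose J' (i : I) := fun k : nat => if (k < p0)%N then J0 k else i.
have incl : forall i, (kermx (Vmat v p0.+1 (J' i)) <= kermx V0)%MS.
  move=> i; rewrite sub_kermx; apply/eqP/matrixP => a k.
  have := congr1 (fun M : 'M[rat]_(m, p0.+1) => M a (widen_ord (leqnSn p0) k)) (mulmx_ker (Vmat v p0.+1 (J' i))).
  rewrite !mxE => h; apply: etrans h; apply: eq_bigr => j _; rewrite /V0 !mxE /= /J' ltn_ord //.
have eqk : forall i, (kermx V0 <= kermx (Vmat v p0.+1 (J' i)))%MS.
  move=> i; rewrite -(mxrank_leqif_sup (incl i)).2.
  have r' : (\rank (Vmat v p0.+1 (J' i)) <= r)%N.
    by apply: maxr; apply/asboolP; exists p0.+1, (J' i).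
  rewrite !mxrank_ker -/V0 Hr eqn_leq.
  have := mxrankS (incl i); rewrite !mxrank_ker -/V0 Hr => ->.
  by rewrite leq_sub2l.
have K0 : kermx V0 != 0.
  by rewrite -mxrank_eq0 mxrank_ker -/V0 Hr subn_eq0 -ltnNge.
have [a ra] : exists a, row a (kermx V0) != 0.
  apply/existsP; move: K0; apply: contraR; rewrite negb_exists => /forallP H0.
  apply/eqP/row_matrixP => a; rewrite row0; apply/eqP; move: (H0 a); by rewrite negbK.
set c := row a (kermx V0).
have cV : forall i, c *m Vmat v p0.+1 (J' i) = 0.
  move=> i; apply/sub_kermxP; apply: submx_trans (eqk i); exact: row_sub.
have [D [D0 HD]] := @clear_den m (fun j => c 0 j).
have [af Haf] : exists af : 'I_m -> int, forall j, c 0 j * D%:~R = (af j)%:~R.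
  by exists (fun j => projT1 (cid (HD j))) => j; case: (cid (HD j)).
have sum0 : \sum_j v j *~ af j = 0.
  apply/funext => i; rewrite eval_sum /=.
  have := congr1 (fun M : 'M[rat]_(1, p0.+1) => M 0 ord_max) (cV i); rewrite !mxE => h.
  apply/eqP; rewrite -(intr_eq0 rat) -(@sum_clear m (fun j => v j i) af (fun j => c 0 j) D Haf).
  rewrite (_ : \sum_k _ = 0) ?mul0r //; apply: etrans _ h; apply: eq_bigr => j _.
  by rewrite !mxE /J' /= ltnn mulrC.
move/(_ af sum0): Hv => Haf0.
move/negP: ra; apply; apply/eqP/rowP => j; rewrite [RHS]mxE -/c.
have := Haf j; rewrite Haf0 => /eqP; rewrite mulf_eq0 intr_eq0 (negbTE D0) orbF.
by move/eqP.
Qed.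

Lemma key (I : Type) m n (v : 'I_m -> I -> int) (L : 'I_n -> I -> int) :
  Zindep v -> (n < m)%N ->
  exists p (J : nat -> I) (w : 'I_p -> int),
    (forall t, \sum_(k < p) w k * L t (J k) = 0) /\
    exists j, \sum_(k < p) w k * v j (J k) != 0.
Proof.
move=> Hv nm.
have m0 : (0 < m)%N by apply: leq_ltn_trans nm.
case: (pselect (inhabited I)) => [[i0]|noI]; last first.
  exfalso.
  have := Hv (fun _ => 1).
  have -> : \sum_k v k *~ 1 = 0 by apply/funext => i; case: noI; exists.
  by move/(_ erefl (Ordinal m0)).
have [p [J rV]] := @full_rank I i0 m v Hv.
set V := Vmat v p J; set Lm := Vmat L p J; set W := cokermx Lm.
have VW : V *m W != 0.
  apply/negP => /eqP h.
  have : (V <= Lm)%MS by rewrite submxE h.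
  move/mxrankS; rewrite rV => h2.
  have := leq_trans h2 (rank_leq_row Lm).
  by rewrite leqNgt nm.
have [j [k jk]] : exists j k, (V *m W) j k != 0.
  apply: contrapT => H0; move/negP: VW; apply; apply/eqP/matrixP => j k; rewrite [RHS]mxE.
  by apply/eqP; apply: contrapT => /negP h; apply: H0; exists j, k.
have [D [D0 HD]] := @clear_den p (fun t => W t k).
have [af Haf] : exists af : 'I_p -> int, forall t, W t k * D%:~R = (af t)%:~R.
  by exists (fun j => projT1 (cid (HD j))) => t; case: (cid (HD t)).
exists p, J, af; split.
  move=> t; apply/eqP; under eq_bigr => k0 _ do rewrite mulrC.
  have := congr1 (fun M : 'M[rat]_(n, p) => M t k) (mulmx_coker Lm).
  rewrite !mxE => h.
  rewrite -(intr_eq0 rat) -(@sum_clear p (fun k' => L t (J k')) af (fun t => W t k) D Haf) //.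
  rewrite (_ : \sum_k _ = 0) ?mul0r //; apply: etrans _ h; apply: eq_bigr => t' _.
  by rewrite !mxE.
exists j.
have : (V *m W) j k * D%:~R != 0 by rewrite mulf_neq0 // intr_eq0.
rewrite mxE (_ : \sum_k _ = \sum_(t < p) (v j (J t))%:~R * W t k); last first.
  by apply: eq_bigr => t _; rewrite !mxE.
rewrite (@sum_clear p (fun k' => v j (J k')) af (fun t => W t k) D Haf) intr_eq0.
by under eq_bigr => k0 _ do rewrite mulrC.
Qed.

Local Open Scope classical_set_scope.

Lemma sub_closed (G : zmodType) (H : set G) : is_subgroup H ->
  (forall x y, H x -> H y -> H (x + y)) /\ (forall x k, H x -> H (x *~ k)).
Proof.
move=> [H0 HB].
have HN x : H x -> H (- x) by move=> Hx; rewrite -sub0r; apply: HB.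
have HD x y : H x -> H y -> H (x + y) by move=> Hx Hy; rewrite -(opprK y); apply: HB => //; apply: HN.
split => // x [n|n] Hx.
  by rewrite -pmulrn; elim: n => [|n IH]; rewrite ?mulr0n // mulrS; apply: HD.
rewrite NegzE mulrNz -pmulrn; apply: HN.
by elim: n.+1 => [|k IH]; rewrite ?mulr0n // mulrS; apply: HD.
Qed.

Lemma step (G : zmodType) (I : Type) (iota : G -> I -> int) (H : set G) :
  (forall x y, iota (x + y) = iota x + iota y) -> injective iota ->
  ~ finite_rank H ->
  forall s : seq G, exists ph : (G -> int) * G,
    (forall x y, ph.1 (x + y) = ph.1 x + ph.1 y) /\
    (forall t, (t < size s)%N -> ph.1 (nth 0 s t) = 0) /\
    H ph.2 /\ ph.1 ph.2 != 0.
Proof.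
move=> hi iinj Hnf s.
have [m [v [Hv [Zv nm]]]] : exists m (v : 'I_m -> G),
    (forall k, H (v k)) /\ Zindep v /\ (size s < m)%N.
  apply: contrapT => C; apply: Hnf; exists (size s) => m v Hk Hz.
  by rewrite leqNgt; apply/negP => nm; apply: C; exists m, v.
have i0 : iota 0 = 0.
  by have h := hi 0 0; rewrite addr0 in h; apply: (addrI (iota 0)); rewrite addr0 -h.
have Ziv : Zindep (fun k => iota (v k)).
  move=> c hc; apply: Zv; apply: iinj; rewrite i0 -hc.
  rewrite (hom_sum hi); apply: eq_bigr => k _.
  by apply: (hom_zmul (A := setT) (fun x y _ _ => hi x y)).
have [p [J [w [HL [j Hj]]]]] := @key I m (size s) _ ( fun t : 'I_(size s) => iota (nth 0 s t)) Ziv nm.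
exists ((fun x => \sum_(k < p) w k * iota x (J k)), v j) => /=; split.
  by move=> x y; rewrite -big_split /=; apply: eq_bigr => k _; rewrite hi -mulrDr.
split; last by split.
by move=> t ht; apply: (HL (Ordinal ht)).
Qed.

Fixpoint build (T : Type) (g : seq T -> T) (n : nat) : seq T :=
  match n with 0 => [::] | n'.+1 => rcons (build T g n') (g (build T g n')) end.

Arguments build {T} g n.
Lemma size_build T g n : size (@build T g n) = n.
Proof. by elim: n => //= n IH; rewrite size_rcons IH. Qed.

Lemma nth_build T (x0 : T) g k n : (n < k)%N -> nth x0 (build g k) n = g (build g n).
Proof.
elim: k => // k IH; rewrite ltnS leq_eqVlt => /orP [/eqP ->|nk] /=.
  by rewrite nth_rcons size_build ltnn eqxx.
by rewrite nth_rcons size_build nk IH.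
Qed.

Lemma main_claim (G : zmodType) (H : set G) (psi : nat -> G -> int) (h : nat -> G) :
  is_subgroup H ->
  (forall n x y, psi n (x + y) = psi n x + psi n y) ->
  (forall n, H (h n)) -> (forall n, psi n (h n) != 0) ->
  (forall n k, (n < k)%N -> psi k (h n) = 0) ->
  forall N (z : Zomega), (forall k, (N <= k)%N -> z k = 0) ->
  exists d : int, d != 0 /\ exists g, H g /\ z *~ d = (fun n => psi n g).
Proof.
move=> Hs hpsi Hh hnz htri.
have [HD HZ] := @sub_closed G H Hs.
pose phi := fun g => (fun n => psi n g) : Zomega.
have phiD : forall x y, phi (x + y) = phi x + phi y.
  by move=> x y; apply/funext => n; rewrite /phi hpsi.
have phiZ : forall x k, phi (x *~ k) = phi x *~ k.
  by move=> x k; apply: (hom_zmul (A := setT) (fun x y _ _ => phiD x y)).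
have evZ : forall (f : Zomega) k n, (f *~ k) n = f n * k.
  move=> f k n; rewrite -mulrzz.
  exact: (hom_zmul (A := setT) (f := fun f : Zomega => f n) (fun _ _ _ _ => erefl) Logic.I (fun _ _ _ _ => Logic.I) f k Logic.I).
have evB : forall (f g : Zomega) n, (f - g) n = f n - g n by [].
elim=> [|N IH] z hz.
  exists 1; split => //; exists 0; split; first by case: Hs.
  have -> : z = 0 by apply/funext => k; apply: hz.
  rewrite mul0rz; apply/funext => n /=.
  by have := hpsi n 0 0; rewrite addr0 => h0; apply: (addrI (psi n 0)); rewrite addr0 -h0.
pose a := psi N (h N).
pose z' := z *~ a - phi (h N) *~ (z N).
have hz' : forall k, (N <= k)%N -> z' k = 0.
  move=> k; rewrite leq_eqVlt => /orP [/eqP <-|Nk].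
    by rewrite /z' evB !evZ /phi /a mulrC subrr.
  by rewrite /z' evB !evZ /phi hz // htri // mul0r mul0r subrr.
have [d [d0 [g [Hg Eg]]]] := IH z' hz'.
exists (a * d); split; first by rewrite mulf_neq0 ?hnz.
exists (g + h N *~ (z N * d)); split.
  by apply: HD => //; apply: HZ.
have Eg' : z' *~ d = phi g := Eg.
by rewrite -/(phi _) phiD -Eg' phiZ /z' mulrzBl -!mulrzA subrK.
Qed.

Theorem theorem4 (G : zmodType) :
  torsionless G ->
  (exists H : set G, is_subgroup H /\ ~ finite_rank H /\ binds H) ->
  exists phi : G -> Zomega,
    (forall x y, phi (x + y) = phi x + phi y) /\
    binds_in [set z : Zomega | exists g y, Zfin y /\ z = phi g + y] Zfin.
Proof.
move=> [I [iota [hi iinj]]] [H [Hs [Hnf Hb]]].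
have [S HS] := choice (@step G I iota H hi iinj Hnf).
pose g := fun s => (S s).2.
pose psi := fun n => (S (build g n)).1.
pose h := fun n => g (build g n).
pose phi := fun x => (fun n => psi n x) : Zomega.
have psiD : forall n x y, psi n (x + y) = psi n x + psi n y.
  by move=> n x y; case: (HS (build g n)) => hd _; apply: hd.
have Hh : forall n, H (h n) by move=> n; case: (HS (build g n)) => _ [_ []].
have hnz : forall n, psi n (h n) != 0 by move=> n; case: (HS (build g n)) => _ [_ []].
have htri : forall n k, (n < k)%N -> psi k (h n) = 0.
  move=> n k nk; case: (HS (build g k)) => _ [Ht _].
  by rewrite /h -(@nth_build G 0 g k n nk); apply: Ht; rewrite size_build.
have claim := @main_claim G H psi h Hs psiD Hh hnz htri.
have phiD : forall x y, phi (x + y) = phi x + phi y.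
  by move=> x y; apply/funext => n; rewrite /phi psiD.
exists phi; split => // F f Ffree hf.
set A := [set z : Zomega | exists g y, Zfin y /\ z = phi g + y].
have phi0 : phi 0 = 0.
  by have h0 := phiD 0 0; rewrite addr0 in h0; apply: (addrI (phi 0)); rewrite addr0 -h0.
have Z0 : Zfin 0 by exists 0%N.
have A0 : A 0 by exists 0, 0; rewrite phi0 addr0.
have phiN : forall x, phi (- x) = - phi x.
  move=> x; have := @hom_zmul _ _ setT phi (fun x y _ _ => phiD x y) Logic.I (fun _ _ _ _ => Logic.I) x (-1) Logic.I.
  by rewrite !mulrN1z.
have AB : forall x y, A x -> A y -> A (x - y).
  move=> x y [g1 [y1 [[N1 hN1] ->]]] [g2 [y2 [[N2 hN2] ->]]].
  exists (g1 - g2), (y1 - y2); split.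
    exists (maxn N1 N2) => n hn.
    have e : (y1 - y2) n = y1 n - y2 n by [].
    rewrite e hN1 ?hN2 ?subrr //; apply: leq_trans hn; by rewrite ?leq_maxl ?leq_maxr.
  by rewrite phiD phiN opprD addrACA.
have fZ := hom_zmul hf A0 AB.
have ZA : forall z, Zfin z -> A z by move=> z Zz; exists 0, z; rewrite phi0 add0r.
have PA : forall x, A (phi x) by move=> x; exists x, 0; rewrite addr0.
have hg : hom_on setT (f \o phi).
  rewrite /hom_on => x y _ _ /=; rewrite phiD hf //; apply: PA.
have [N0 HN0] := Hb F (f \o phi) Ffree hg.
exists N0 => m v Hvk Hz.
have ex : forall k : 'I_m, exists dh : int * G, dh.1 != 0 /\ H dh.2 /\
     exists z, Zfin z /\ f z = v k /\ z *~ dh.1 = phi dh.2.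
  move=> k.
  have [z [Nz hz] fz] := Hvk k.
  have [d [d0 [x [Hx Ex]]]] := claim Nz z hz.
  exists (d, x); split => //; split => //; exists z; split => //; by exists Nz.
have [DH HDH] := choice ex.
apply: (HN0 m (fun k => f (phi (DH k).2))).
  by move=> k; exists (DH k).2 => //; case: (HDH k) => _ [].
move=> c hc k.
have : (DH k).1 * c k = 0.
  apply: (Hz (fun k => (DH k).1 * c k)) => //.
  apply: etrans hc; apply: eq_bigr => j _.
  case: (HDH j) => _ [_ [z [Zz [fz Ez]]]].
  by rewrite -Ez fZ ?fz ?mulrzA //; apply: ZA.
by move/eqP; rewrite GRing.mulf_eq0; case: (HDH k) => /negbTE -> _ /= /eqP.
Qed.
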